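(* Let $\delta_{\max}\approx0.453$ be the positive real root of $\delta^3+2\delta-1$ and define $\rho:[0,\delta_{\max}]\to\mathbb{R}$ by $\rho(\delta)=-\frac{2\delta^2+3}{2}+\frac{\sqrt{4\delta^2+4\delta+9}}{2}$. Then $\rho$ attains a maximum value $r_{\max}$ on $[0,\delta_{\max}]$ (numerically $r_{\max}\approx 0.0386$), and $r_{\max}\le r_{\mathrm{bif}}(-1)$.
   Context: $f_c(z)=z^2+c$, extended to $\widehat{\mathbb{C}}$ by $f_c(\infty)=\infty$. For $c\in\mathbb{C}$, $r\ge0$, $G_{c,r}$ is the semigroup under composition generated by $\{f_{c'}:|c'-c|\le r\}$. A minimal set of a polynomial semigroup $G$ is a minimal element, with respect to inclusion, of the family of non-empty compact $L\subset\widehat{\mathbb{C}}$ with $g(L)\subset L$ for all $g\in G$; it is planar if $\infty\notin L$. The bifurcation radius $r_{\mathrm{bif}}(c)$ is the supremum of those $r\ge0$ for which $G_{c,r}$ has a planar minimal set (equivalently the infimum of those $r\ge0$ for which $G_{c,r}$ has no planar minimal set); by prior work this value is attained and $G_{c,r}$ has a planar minimal set iff $r\le r_{\mathrm{bif}}(c)$. *)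

(* Defs.v *)
From Stdlib Require Import Reals List.
From Coquelicot Require Import Coquelicot.
Open Scope R_scope.

(* The Riemann sphere: [Some z] is the point z of C, [None] is infinity. *)
Definition Chat := option C.

(* Topology of the one-point compactification: U is open iff its finite part
   is open in C, and if it contains infinity it contains a neighbourhood
   {|z| > M} of infinity. *)
Definition open_hat (U : Chat -> Prop) : Prop :=
  open (fun z : C => U (Some z)) /\
  (U None -> exists M : R, forall z : C, M < Cmod z -> U (Some z)).

Definition compact_hat (L : Chat -> Prop) : Prop :=
  forall (I : Type) (U : I -> Chat -> Prop),
    (forall i, open_hat (U i)) ->
    (forall x, L x -> exists i, U i x) ->
    exists l : list I, forall x, L x -> exists i, In i l /\ U i x.

Definition fc (c : C) (w : Chat) : Chat :=
  match w with
  | Some z => Some (Cplus (Cmult z z) c)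
  | None => None
  end.

Inductive in_G (c : C) (r : R) : (Chat -> Chat) -> Prop :=
  | G_gen : forall c' : C, Cmod (Cminus c' c) <= r -> in_G c r (fc c')
  | G_comp : forall g h, in_G c r g -> in_G c r h ->
      in_G c r (fun w => g (h w)).

Definition invariant_compact (c : C) (r : R) (L : Chat -> Prop) : Prop :=
  (exists x, L x) /\ compact_hat L /\
  (forall g, in_G c r g -> forall x, L x -> L (g x)).

Definition minimal_set (c : C) (r : R) (L : Chat -> Prop) : Prop :=
  invariant_compact c r L /\
  (forall L', invariant_compact c r L' -> (forall x, L' x -> L x) ->
     forall x, L x -> L' x).

Definition planar_minimal_set (c : C) (r : R) (L : Chat -> Prop) : Prop :=
  minimal_set c r L /\ ~ L None.

Definition has_planar_minimal_set (c : C) (r : R) : Prop :=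
  exists L, planar_minimal_set c r L.

Definition r_bif (c : C) : Rbar :=
  Lub_Rbar (fun r => 0 <= r /\ has_planar_minimal_set c r).

Definition rho (d : R) : R :=
  - (2 * d ^ 2 + 3) / 2 + sqrt (4 * d ^ 2 + 4 * d + 9) / 2.

(* Main.v *)
Require Import Defs.
From Stdlib Require Import Reals List Lra Psatz Classical ClassicalEpsilon.
From Coquelicot Require Import Coquelicot.
Open Scope R_scope.

Lemma Ceq (x y : C) : fst x = fst y -> snd x = snd y -> x = y.
Proof. destruct x, y; simpl; intros; subst; reflexivity. Qed.

Lemma Cmod_small (u : C) d : Rabs (fst u) < d -> Rabs (snd u) < d -> Cmod u < 2 * d.
Proof.
  intros H1 H2. unfold Cmod.
  assert (0 <= d) by (pose proof (Rabs_pos (fst u)); lra).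
  rewrite <- (sqrt_pow2 (2*d)) by lra.
  apply sqrt_lt_1_alt. split. nra.
  assert (fst u ^ 2 < d^2). { rewrite <- (pow2_abs (fst u)). pose proof (Rabs_pos (fst u)). nra. }
  assert (snd u ^ 2 < d^2). { rewrite <- (pow2_abs (snd u)). pose proof (Rabs_pos (snd u)). nra. }
  nra.
Qed.

Lemma Cmod_to_ball (z w : C) (e : R) : Cmod (w - z)%C < e -> ball z e w.
Proof. intros H. apply C_NormedModule_mixin_compat1. exact H. Qed.

Lemma ball_to_Cmod (z w : C) (e : posreal) : ball z e w -> Cmod (w - z)%C < 2 * e.
Proof.
  intros H. pose proof (C_NormedModule_mixin_compat2 z w e H).
  assert (sqrt 2 < 2). { pose proof (sqrt_pos 2). pose proof (sqrt_sqrt 2). nra. }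
  pose proof (cond_pos e). assert (E: Cmod (w - z)%C = Cmod (minus w z)) by reflexivity. rewrite E. apply Rlt_le_trans with (sqrt 2 * e); [exact H0| apply Rmult_le_compat_r; lra].
Qed.

Lemma Cmod_sub_sym (x y : C) : Cmod (x - y)%C = Cmod (y - x)%C.
Proof. rewrite <- Cmod_opp. f_equal. ring. Qed.

Lemma Cmod_tri3 (x y z : C) : Cmod (x - z)%C <= Cmod (x - y)%C + Cmod (y - z)%C.
Proof. replace (x - z)%C with ((x - y) + (y - z))%C by ring. apply Cmod_triangle. Qed.

Definition hat (A : C -> Prop) (x : Chat) : Prop :=
  match x with Some z => A z | None => False end.

Definition closedC (A : C -> Prop) : Prop :=
  forall z, ~ A z -> exists e, 0 < e /\ forall w, Cmod (w - z)%C < e -> ~ A w.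

Lemma in_max (l : list nat) i : In i l -> (i <= fold_right max 0 l)%nat.
Proof. induction l; simpl; [tauto|]. intros [->|H]; [lia|]. specialize (IHl H); lia. Qed.

Lemma HB (A : C -> Prop) (B : R) :
  closedC A -> (forall z, A z -> Cmod z <= B) -> compact_hat (hat A).
Proof.
  intros HA HB I U HU Hcov.
  set (pt := fun t : Compactness.Tn 2 R => (fst t, fst (snd t)) : C).
  assert (claim : forall t, exists e : posreal,
    (A (pt t) -> exists i, forall w, Cmod (w - pt t)%C < 2 * e -> U i (Some w)) /\
    (~ A (pt t) -> forall w, Cmod (w - pt t)%C < 2 * e -> ~ A w)).
  { intros t. destruct (classic (A (pt t))) as [Ha|Ha].
    - destruct (Hcov (Some (pt t)) Ha) as [i Hi].
      destruct (HU i) as [Ho _]. destruct (Ho _ Hi) as [eps Heps].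
      assert (0 < eps / 2) by (pose proof (cond_pos eps); lra).
      exists (mkposreal _ H). split; [|tauto]. intros _. exists i.
      intros w Hw. apply Heps. apply Cmod_to_ball. simpl in Hw. lra.
    - destruct (HA _ Ha) as [e [He He']].
      assert (0 < e / 2) by lra.
      exists (mkposreal _ H). split; [tauto|]. intros _ w Hw. apply He'. simpl in Hw. lra. }
  set (delta := fun t => proj1_sig (constructive_indefinite_description _ (claim t))).
  assert (Hd : forall t, (A (pt t) -> exists i, forall w, Cmod (w - pt t)%C < 2 * delta t -> U i (Some w)) /\
    (~ A (pt t) -> forall w, Cmod (w - pt t)%C < 2 * delta t -> ~ A w)).
  { intros t. unfold delta. destruct (constructive_indefinite_description _ (claim t)). simpl. exact a. }
  pose proof (Compactness.compactness_list 2 (-B, (-B, tt)) (B, (B, tt)) delta) as Hl.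
  apply NNPP in Hl. destruct Hl as [l Hl].
  assert (Hli : exists li : list I, forall t, In t l -> A (pt t) ->
     exists i, In i li /\ forall w, Cmod (w - pt t)%C < 2 * delta t -> U i (Some w)).
  { clear Hl. induction l as [|t l IH].
    - exists nil. simpl. tauto.
    - destruct IH as [li Hli]. destruct (classic (A (pt t))) as [Ha|Ha].
      + destruct (proj1 (Hd t) Ha) as [i Hi]. exists (i :: li).
        intros t' [<-|Ht'] Ha'. exists i. simpl; auto.
        destruct (Hli t' Ht' Ha') as [j [Hj1 Hj2]]. exists j. simpl; auto.
      + exists li. intros t' [<-|Ht'] Ha'. tauto. auto. }
  destruct Hli as [li Hli]. exists li.
  intros [z|] Hz; [|simpl in Hz; tauto]. simpl in Hz.
  pose proof (HB z Hz) as Hb.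
  pose proof (re_le_Cmod z) as H1.
  assert (H2 : Rabs (snd z) <= Cmod z).
  { unfold Cmod. rewrite <- sqrt_Rsqr_abs. apply sqrt_le_1_alt. unfold Rsqr. simpl. nra. }
  destruct (Hl (fst z, (snd z, tt))) as [t [Ht [_ Hc]]].
  { simpl. unfold Re in H1. split; [|split; [|exact Logic.I]]; apply Rabs_le_between; lra. }
  destruct t as [t1 [t2 []]]. simpl in Hc.
  assert (Hm : Cmod (z - pt (t1, (t2, tt)))%C < 2 * delta (t1, (t2, tt))).
  { apply Cmod_small; simpl; tauto. }
  destruct (classic (A (pt (t1, (t2, tt))))) as [Ha|Ha].
  - destruct (Hli _ Ht Ha) as [i [Hi1 Hi2]]. exists i. split; auto.
  - exfalso. exact (proj2 (Hd _) Ha z Hm Hz).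
Qed.

Lemma cpt_closed (L : Chat -> Prop) : compact_hat L ->
  forall z, ~ L (Some z) -> exists e, 0 < e /\ forall w, Cmod (w - z)%C < e -> ~ L (Some w).
Proof.
  intros HL z Hz.
  destruct (HL nat (fun (n : nat) (x : Chat) => match x with None => True | Some y => / INR (S n) < Cmod (y - z)%C end)) as [l Hl].
  - intros n. split.
    + intros y Hy.
      assert (0 < (Cmod (y - z)%C - / INR (S n)) / 2)  by lra.
      exists (mkposreal _ H). intros y' Hb. cbv beta.
      apply ball_to_Cmod in Hb. cbn [pos] in Hb.
      pose proof (Cmod_tri3 y y' z). rewrite (Cmod_sub_sym y y') in H0. lra.
    + intros _. exists (Cmod z + / INR (S n)). intros z0 Hz0.
      pose proof (Cmod_triangle (z0 - z)%C z). replace (z0 - z + z)%C with z0 in H by ring. lra.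
  - intros [y|] Hy; [|exists O; simpl; auto].
    assert (y <> z) by (intros ->; tauto).
    assert (0 < Cmod (y - z)%C).
    { apply Cmod_gt_0. intros E. apply H. replace y with ((y - z) + z)%C by ring. rewrite E. ring. }
    destruct (archimed_cor1 _ H0) as [N [HN1 HN2]].
    exists (pred N). cbv beta. replace (S (pred N)) with N by lia. auto.
  - set (N := fold_right max 0%nat l).
    exists (/ INR (S N)). split. apply Rinv_0_lt_compat. apply lt_0_INR. lia.
    intros w Hw HLw. destruct (Hl _ HLw) as [i [Hi Hu]]. cbv beta in Hu.
    pose proof (in_max l i Hi).
    assert (/ INR (S N) <= / INR (S i)).
    { apply Rinv_le_contravar. apply lt_0_INR; lia. apply le_INR. fold N in H. lia. }
    lra.
Qed.

Definition gC (g : Chat -> Chat) (z : C) : C :=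
  match g (Some z) with Some w => w | None => 0%C end.

Lemma G_some c r g : in_G c r g -> forall z, g (Some z) = Some (gC g z).
Proof.
  induction 1; intros z; unfold gC; simpl.
  - reflexivity.
  - rewrite IHin_G2. rewrite IHin_G1. reflexivity.
Qed.

Lemma gC_comp c r g h z : in_G c r g -> in_G c r h -> gC (fun w => g (h w)) z = gC g (gC h z).
Proof. intros Hg Hh. unfold gC at 1. rewrite (G_some _ _ _ Hh). rewrite (G_some _ _ _ Hg). reflexivity. Qed.

Lemma sq_cont (z : C) e : 0 < e -> exists d, 0 < d /\ forall w, Cmod (w - z)%C < d -> Cmod (w * w - z * z)%C < e.
Proof.
  intros He. set (m := Cmod z).
  assert (Hm : 0 <= m) by apply Cmod_ge_0.
  exists (Rmin 1 (e / (2 * m + 1))). split.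
  { apply Rmin_pos. lra. apply Rdiv_lt_0_compat; lra. }
  intros w Hw.
  replace (w * w - z * z)%C with ((w - z) * ((w - z) + 2 * z))%C by ring.
  rewrite Cmod_mult.
  pose proof (Cmod_triangle (w - z)%C (2 * z)%C).
  rewrite Cmod_mult in H. 
  assert (Cmod 2 = 2). { rewrite Cmod_R. apply Rabs_pos_eq. lra. }
  rewrite H0 in H. fold m in H.
  pose proof (Rmin_l 1 (e / (2 * m + 1))). pose proof (Rmin_r 1 (e / (2 * m + 1))).
  set (d := Rmin 1 (e / (2 * m + 1))) in *.
  pose proof (Cmod_ge_0 (w - z)%C).
  assert (d * (2 * m + 1) <= e).
  { apply Rle_trans with (e / (2 * m + 1) * (2 * m + 1)). apply Rmult_le_compat_r; lra.
    right. field. lra. }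
  assert (Cmod (w - z + 2 * z)%C <= 2 * m + 1) by lra.
  pose proof (Cmod_ge_0 (w - z + 2 * z)%C).
  apply Rle_lt_trans with (Cmod (w - z)%C * (2 * m + 1)). apply Rmult_le_compat_l; lra.
  nra.
Qed.

Lemma G_cont c r g : in_G c r g -> forall z e, 0 < e ->
  exists d, 0 < d /\ forall w, Cmod (w - z)%C < d -> Cmod (gC g w - gC g z)%C < e.
Proof.
  induction 1 as [c' Hc|g h Hg IHg Hh IHh]; intros z e He.
  - destruct (sq_cont z e He) as [d [Hd Hd']]. exists d. split; auto.
    intros w Hw. unfold gC; simpl. replace (w * w + c' - (z * z + c'))%C with (w * w - z * z)%C by ring. auto.
  - destruct (IHg (gC h z) e He) as [d1 [Hd1 H1]].
    destruct (IHh z d1 Hd1) as [d2 [Hd2 H2]].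
    exists d2. split; auto. intros w Hw.
    rewrite !(gC_comp c r g h) by auto. apply H1. apply H2. auto.
Qed.

Section Min.
Variables (c : C) (r : R) (K : C -> Prop) (B : R) (z0 : C).
Hypotheses (HKc : closedC K) (HKb : forall z, K z -> Cmod z <= B)
  (HKi : forall g, in_G c r g -> forall z, K z -> K (gC g z)) (HK0 : K z0)
  (Hreach : forall z, K z -> exists g, in_G c r g /\ g (Some z) = Some z0)
  (Hne : exists g, in_G c r g).

Definition Mc (z : C) : Prop :=
  forall e, 0 < e -> exists g, in_G c r g /\ Cmod (gC g z0 - z)%C < e.

Lemma Mc_closed : closedC Mc.
Proof.
  intros z Hz. apply not_all_ex_not in Hz. destruct Hz as [e He].
  apply imply_to_and in He. destruct He as [He He'].
  exists (e / 2). split. lra. intros w Hw Hmw.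
  apply He'. destruct (Hmw (e / 2)) as [g [Hg Hg']]. lra.
  exists g. split; auto. pose proof (Cmod_tri3 (gC g z0) w z). lra.
Qed.

Lemma Mc_K z : Mc z -> K z.
Proof.
  intros Hz. apply NNPP. intros Hn. destruct (HKc z Hn) as [e [He He']].
  destruct (Hz e He) as [g [Hg Hg']]. apply (He' (gC g z0)). auto. apply HKi; auto.
Qed.

Lemma Mc_inv g : in_G c r g -> forall z, Mc z -> Mc (gC g z).
Proof.
  intros Hg z Hz e He. destruct (G_cont c r g Hg z e He) as [d [Hd Hd']].
  destruct (Hz d Hd) as [h [Hh Hh']].
  exists (fun w => g (h w)). split. constructor 2; auto.
  rewrite (gC_comp c r g h) by auto. apply Hd'. auto.
Qed.

Lemma has_pms : has_planar_minimal_set c r.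
Proof.
  exists (hat Mc). split; [|simpl; tauto].
  assert (IC : invariant_compact c r (hat Mc)).
  { split; [|split].
    - destruct Hne as [g Hg]. exists (Some (gC g z0)). simpl. intros e He. exists g. split; auto.
      assert (E: forall u : C, (u - u)%C = 0%C) by (intros; ring). rewrite E, Cmod_0. auto.
    - apply (HB _ B). apply Mc_closed. intros z Hz. apply HKb, Mc_K, Hz.
    - intros g Hg [z|] Hx; simpl in Hx; [|tauto].
      rewrite (G_some c r g Hg). simpl. apply Mc_inv; auto. }
  split; auto.
  intros L' [[x0 Hx0] [HL'c HL'i]] Hsub [z|] Hz; [|simpl in Hz; tauto].
  simpl in Hz.
  destruct x0 as [w|]; [|specialize (Hsub _ Hx0); simpl in Hsub; tauto].
  pose proof (Hsub _ Hx0) as Hw. simpl in Hw. apply Mc_K in Hw.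
  destruct (Hreach w Hw) as [g [Hg Hgw]].
  assert (Hz0 : L' (Some z0)) by (rewrite <- Hgw; apply HL'i; auto).
  apply NNPP. intros Hn. destruct (cpt_closed L' HL'c z Hn) as [e [He He']].
  destruct (Hz e He) as [h [Hh Hh']]. apply (He' (gC h z0)). auto.
  rewrite <- (G_some c r h Hh). apply HL'i; auto.
Qed.
End Min.

Lemma key (a r s : R) : 0 < r -> r <= 1 -> 0 <= s -> s <= a ->
  r + 2 * (a*a + r) + (a*a+r)*(a*a+r) = a ->
  (s*s - r)*(s*s-r) + 2*(s*s-r) - r <= s - 2 * r.
Proof.
  intros. 
  assert (a * ((s*s - r)*(s*s-r) + 2*(s*s-r) - r - s + 2 * r) <= 0).
  { replace (a * ((s*s - r)*(s*s-r) + 2*(s*s-r) - r - s + 2 * r)) with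
     ((a - s) * (r*r - r) + s * (- 4 * r * a * a - 4 * r) - s * (a - s) * (a * (a*a + a*s + s*s) + (2 - 2*r)*a)) by nra.
    assert (0 <= s * (a - s)) by nra.
    assert (0 <= a * (a*a + a*s + s*s) + (2 - 2*r)*a) by nra.
    assert ((a - s) * (r*r - r) <= 0) by (assert (0 <= a - s) by lra; assert (r*r - r <= 0) by nra; nra).
    assert (0 <= s * (4 * r * a * a + 4 * r)) by (apply Rmult_le_pos; nra).
    assert (0 <= s * (a - s) * (a * (a*a + a*s + s*s) + (2 - 2*r)*a)) by (apply Rmult_le_pos; auto).
    lra. }
  destruct (Req_dec a 0). subst. assert (s = 0) by lra. subst. nra.
  assert (0 < a) by lra. nra.
Qed.

Lemma Rmax_mono x y : x <= y -> Rmax 0 x <= Rmax 0 y.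
Proof. intros. unfold Rmax. repeat destruct Rle_dec; lra. Qed.

Definition cm : C := RtoC (-1).
Lemma Hcm : cm = (- 1)%C.
Proof. apply Ceq; simpl; ring. Qed.

Lemma Cmod_R2 : Cmod (RtoC 2) = 2.
Proof. rewrite Cmod_R. apply Rabs_pos_eq. lra. Qed.

Lemma Cmod_sq z : Cmod (z * z)%C = Cmod z * Cmod z.
Proof. apply Cmod_mult. Qed.

Lemma Cmod_poly (v : C) : Cmod ((v * v) - RtoC 2 * v)%C <= Cmod v * Cmod v + 2 * Cmod v.
Proof.
  replace ((v * v) - RtoC 2 * v)%C with ((v * v) + (- (RtoC 2 * v)))%C by ring.
  eapply Rle_trans. apply Cmod_triangle. rewrite Cmod_opp, !Cmod_mult, Cmod_R2. lra.
Qed.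

Lemma shrink (r : R) : 0 <= r -> forall X : C, exists e : C, Cmod e <= r /\ Cmod (X + e)%C <= Rmax 0 (Cmod X - r).
Proof.
  intros Hr X. destruct (Rle_dec (Cmod X) r) as [H|H].
  - exists (- X)%C. rewrite Cmod_opp. split; auto.
    replace (X + - X)%C with (RtoC 0) by ring. rewrite Cmod_0. apply Rmax_l.
  - set (m := Cmod X) in *.
    assert (Hm : 0 < m) by lra.
    exists (RtoC (- (r / m)) * X)%C. split.
    + rewrite Cmod_mult, Cmod_R. rewrite Rabs_Ropp, Rabs_pos_eq. fold m. right. field. lra.
      apply Rdiv_le_0_compat; lra.
    + replace (X + RtoC (- (r / m)) * X)%C with (RtoC (1 - r / m) * X)%C.
      2:{ apply Ceq; simpl; ring. }
      rewrite Cmod_mult, Cmod_R, Rabs_pos_eq. fold m.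
      replace ((1 - r / m) * m) with (m - r) by (field; lra). apply Rmax_r.
      assert (r / m <= 1). { apply (Rmult_le_reg_r m); auto. unfold Rdiv. rewrite Rmult_assoc, Rinv_l by lra. lra. } lra.
Qed.

Section Dyn.
Variables (a r : R).
Hypotheses (Hr : 0 < r) (Hr1 : r <= 1) (Ha : 0 <= a)
  (Hid : r + 2 * (a*a + r) + (a*a+r)*(a*a+r) = a).
Let b := a * a + r.

Definition Kset (z : C) : Prop := Cmod z <= a \/ Cmod (z + 1)%C <= b.

Lemma K_closed : closedC Kset.
Proof.
  intros z Hz. unfold Kset in Hz.
  assert (H1 : a < Cmod z) by (apply Rnot_le_lt; tauto).
  assert (H2 : b < Cmod (z + 1)%C) by (apply Rnot_le_lt; tauto).
  exists (Rmin (Cmod z - a) (Cmod (z + 1)%C - b)). split.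
  apply Rmin_pos; lra.
  intros w Hw [Hw1|Hw1].
  - pose proof (Cmod_triangle (z - w)%C w). replace (z - w + w)%C with z in H by ring.
    rewrite Cmod_sub_sym in H. pose proof (Rmin_l (Cmod z - a) (Cmod (z + 1)%C - b)). lra.
  - pose proof (Cmod_triangle (z - w)%C (w + 1)%C). replace (z - w + (w + 1))%C with (z + 1)%C in H by ring.
    rewrite Cmod_sub_sym in H. pose proof (Rmin_r (Cmod z - a) (Cmod (z + 1)%C - b)). lra.
Qed.

Lemma K_bound z : Kset z -> Cmod z <= a + 1 + b.
Proof.
  assert (0 <= b) by (unfold b; nra).
  intros [Hz|Hz]. lra.
  pose proof (Cmod_triangle (z + 1)%C (- 1)%C) as H1. replace (z + 1 + - 1)%C with z in H1 by ring.
  assert (Cmod (RtoC (-1)) = 1) by (rewrite Cmod_R; rewrite Rabs_left by lra; lra). lra.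
Qed.

Lemma K_inv1 c' z : Cmod (c' - cm)%C <= r -> Kset z -> Kset (z * z + c')%C.
Proof.
  intros Hc [H|H]; pose proof (Cmod_ge_0 z) as H0.
  - right. replace (z * z + c' + 1)%C with (z * z + (c' - cm))%C by (rewrite Hcm; ring).
    eapply Rle_trans. apply Cmod_triangle. rewrite Cmod_sq. unfold b. nra.
  - left. replace (z * z + c')%C with (((z + 1) * (z + 1) - RtoC 2 * (z + 1)) + (c' - cm))%C.
    2:{ rewrite Hcm. apply Ceq; simpl; ring. }
    eapply Rle_trans. apply Cmod_triangle. pose proof (Cmod_poly (z + 1)%C).
    pose proof (Cmod_ge_0 (z + 1)%C).
    assert (Cmod (z + 1)%C * Cmod (z + 1)%C + 2 * Cmod (z + 1)%C <= b * b + 2 * b) by nra.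
    unfold b in *. lra.
Qed.

Lemma K_inv g : in_G cm r g -> forall z, Kset z -> Kset (gC g z).
Proof.
  induction 1 as [c' Hc|g h Hg IHg Hh IHh]; intros z Hz.
  - apply K_inv1; auto.
  - rewrite (gC_comp cm r g h) by auto. auto.
Qed.

Lemma step0 z : exists c', Cmod (c' - cm)%C <= r /\ Cmod (z * z + c' + 1)%C <= Rmax 0 (Cmod z * Cmod z - r).
Proof.
  destruct (shrink r (Rlt_le _ _ Hr) (z * z)%C) as [e [He1 He2]].
  exists (cm + e)%C. split.
  - replace (cm + e - cm)%C with e by ring. auto.
  - replace (z * z + (cm + e) + 1)%C with (z * z + e)%C by (rewrite Hcm; ring).
    rewrite Cmod_sq in He2. auto.
Qed.

Lemma step1 z : exists c', Cmod (c' - cm)%C <= r /\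
  Cmod (z * z + c')%C <= Rmax 0 (Cmod (z + 1)%C * Cmod (z + 1)%C + 2 * Cmod (z + 1)%C - r).
Proof.
  set (X := ((z + 1) * (z + 1) - RtoC 2 * (z + 1))%C).
  destruct (shrink r (Rlt_le _ _ Hr) X) as [e [He1 He2]].
  exists (cm + e)%C. split.
  - replace (cm + e - cm)%C with e by ring. auto.
  - replace (z * z + (cm + e))%C with (X + e)%C.
    2:{ unfold X. rewrite Hcm. apply Ceq; simpl; ring. }
    eapply Rle_trans. apply He2. apply Rmax_mono. pose proof (Cmod_poly (z + 1)%C). fold X in H. lra.
Qed.

Definition reach (z : C) : Prop := exists g, in_G cm r g /\ g (Some z) = Some (RtoC 0).

Lemma reach_comp c' z : Cmod (c' - cm)%C <= r -> reach (z * z + c')%C -> reach z.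
Proof.
  intros Hc [g [Hg Hgz]]. exists (fun w => g (fc c' w)). split.
  - constructor 2; auto. constructor 1; auto.
  - simpl. exact Hgz.
Qed.

Lemma cm_ok : Cmod (cm - cm)%C <= r.
Proof. replace (cm - cm)%C with (RtoC 0) by ring. rewrite Cmod_0. lra. Qed.

Lemma reach0 : reach (RtoC 0).
Proof.
  exists (fun w => fc cm (fc cm w)). split.
  - constructor 2; constructor 1; apply cm_ok.
  - simpl. f_equal. rewrite Hcm. apply Ceq; simpl; ring.
Qed.

Lemma ineq s p : 0 <= s <= a -> 0 <= p <= Rmax 0 (s * s - r) -> Rmax 0 (p * p + 2 * p - r) <= Rmax 0 (s - 2 * r).
Proof.
  intros Hs Hp. destruct (Rle_dec (s * s) r) as [H|H].
  - assert (Rmax 0 (s * s - r) = 0) by (apply Rmax_left; lra).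
    rewrite H0 in Hp. assert (p = 0) by lra. subst.
    rewrite Rmax_left by lra. apply Rmax_l.
  - rewrite Rmax_right in Hp by lra. apply Rmax_mono.
    pose proof (key a r s Hr Hr1 (proj1 Hs) (proj2 Hs) Hid). nra.
Qed.

Lemma two_step z : Cmod z <= a -> exists w, Cmod w <= Rmax 0 (Cmod z - 2 * r) /\ (reach w -> reach z).
Proof.
  intros Hz. destruct (step0 z) as [c1 [Hc1 Hu]].
  set (u := (z * z + c1)%C) in *.
  destruct (step1 u) as [c2 [Hc2 Hw]].
  exists (u * u + c2)%C. split.
  - eapply Rle_trans. apply Hw. apply ineq. split; auto. apply Cmod_ge_0.
    split; auto. apply Cmod_ge_0.
  - intros H. apply (reach_comp c1 z Hc1). apply (reach_comp c2 u Hc2). auto.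
Qed.

Lemma reachD0 n : forall z, Cmod z <= a -> Cmod z <= 2 * r * INR n -> reach z.
Proof.
  induction n as [|n IH]; intros z Hz Hn.
  - simpl in Hn. assert (Cmod z = 0) by (pose proof (Cmod_ge_0 z); lra).
    apply Cmod_eq_0 in H. subst. apply reach0.
  - destruct (two_step z Hz) as [w [Hw Hwz]]. apply Hwz. apply IH.
    + eapply Rle_trans. apply Hw. apply Rmax_lub; lra.
    + eapply Rle_trans. apply Hw. rewrite S_INR in Hn. pose proof (pos_INR n).
      apply Rmax_lub; nra.
Qed.

Lemma reachK z : Kset z -> reach z.
Proof.
  assert (HD0 : forall z, Cmod z <= a -> reach z).
  { intros w Hw. destruct (INR_archimed (2 * r) (Cmod w)) as [n Hn]. lra.
    apply (reachD0 n); auto. lra. }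
  intros [H|H]. auto.
  destruct (step1 z) as [c' [Hc Hw]]. apply (reach_comp c' z Hc). apply HD0.
  eapply Rle_trans. apply Hw. apply Rmax_lub. auto.
  pose proof (Cmod_ge_0 (z + 1)%C).
  assert (Cmod (z + 1)%C * Cmod (z + 1)%C + 2 * Cmod (z + 1)%C <= b * b + 2 * b) by nra.
  unfold b in *. lra.
Qed.

Lemma pms : has_planar_minimal_set cm r.
Proof.
  apply (has_pms cm r Kset (a + 1 + b) (RtoC 0)).
  - apply K_closed.
  - apply K_bound.
  - apply K_inv.
  - left. rewrite Cmod_0. auto.
  - intros z Hz. apply reachK. auto.
  - exists (fc cm). constructor 1. apply cm_ok.
Qed.
End Dyn.

Lemma rho_cont d : continuity_pt rho d.
Proof.
  apply continuity_pt_filterlim. apply (ex_derive_continuous (V := R_NormedModule)).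
  unfold rho. auto_derive. nra.
Qed.

Theorem theorem4p18 :
  forall dmax : R, 0 < dmax -> dmax ^ 3 + 2 * dmax - 1 = 0 ->
  exists d0 : R, 0 <= d0 <= dmax /\
    (forall d : R, 0 <= d <= dmax -> rho d <= rho d0) /\
    Rbar_le (Finite (rho d0)) (r_bif (RtoC (-1))).
Proof.
  intros dmax Hd Hd3.
  destruct (continuity_ab_maj rho 0 dmax) as [d0 [Hmax Hd0]]. lra.
  intros; apply rho_cont.
  exists d0. split; auto. split; auto.
  assert (Hdm1 : 1/10 <= dmax <= 1) by (split; nra).
  assert (Hpos : 0 < rho (1/10)).
  { unfold rho. set (S := sqrt _). assert (0 <= S) by apply sqrt_pos.
    assert (S * S = 4 * (1/10) ^ 2 + 4 * (1/10) + 9) by (apply sqrt_sqrt; nra). nra. }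
  pose proof (Hmax (1/10) ltac:(lra)) as Hr0.
  set (r := rho d0) in *.
  assert (HS : exists S, 0 <= S /\ S * S = 4 * d0 ^ 2 + 4 * d0 + 9 /\ r = - (2 * d0 ^ 2 + 3) / 2 + S / 2).
  { exists (sqrt (4 * d0 ^ 2 + 4 * d0 + 9)). split. apply sqrt_pos. split. apply sqrt_sqrt. nra. reflexivity. }
  destruct HS as [S [HS1 [HS2 HS3]]].
  assert (Hr1 : r <= 1) by nra.
  assert (Hid : r + 2 * (d0 * d0 + r) + (d0 * d0 + r) * (d0 * d0 + r) = d0).
  { rewrite HS3. nra. }
  pose proof (pms d0 r ltac:(lra) Hr1 (proj1 Hd0) Hid) as Hp.
  unfold r_bif. pose proof (Lub_Rbar_correct (fun r => 0 <= r /\ has_planar_minimal_set (RtoC (-1)) r)) as [Hub _].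
  apply Hub. split. lra. exact Hp.
Qed.
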